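(* Let $\phi_0:\mathcal{F}_{\eta_1,\lambda}\to\mathcal{F}_{\eta_2,\lambda}$ be a Virasoro-module homomorphism, i.e. $[L_m,\phi_0]=0$ for all $m\in\mathbb{Z}$, where $\eta_1\neq\eta_2$. Put $k_\phi=\eta_2-\eta_1$ and $$\phi_n=\frac{1}{k_\phi}[\alpha_n,\phi_0]\qquad(n\in\mathbb{Z}).$$ Then: 1. The $n=0$ case recovers the original map: $\frac{1}{k_\phi}[\alpha_0,\phi_0]=\phi_0$. 2. For all $m,n\in\mathbb{Z}$, $[L_m,\phi_n]=-n\,\phi_{m+n}$. 3. Consequently, for all $m,n\in\mathbb{Z}$, $$[L_m,\phi_n]-[L_n,\phi_m]=(m-n)\,\phi_{m+n}.$$ 4. The operators $L_n\mapsto\begin{pmatrix}L_n&\phi_n\\0&L_n\end{pmatrix}$ define a representation of the Virasoro algebra, of central charge $1-12\lambda^2$, on $\mathcal{F}_{\eta_2,\lambda}\oplus\mathcal{F}_{\eta_1,\lambda}$.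
   Context: The Heisenberg algebra has modes $\alpha_n$ ($n\in\mathbb{Z}$) with $[\alpha_m,\alpha_n]=m\delta_{m,-n}$. $\mathcal{F}_\eta$ is the Fock space generated by a vacuum $|\eta\rangle$ with $\alpha_n|\eta\rangle=0$ for $n>0$ and $\alpha_0|\eta\rangle=\eta|\eta\rangle$; $\alpha_0$ acts on all of $\mathcal{F}_\eta$ as the scalar $\eta$. $\mathcal{F}_{\eta,\lambda}$ denotes $\mathcal{F}_\eta$ with the Virasoro action $$L_n=\tfrac12\sum_k:\alpha_k\alpha_{n-k}:-\lambda(n+1)\alpha_n,$$ where normal ordering places positive-index modes to the right. In $[\alpha_n,\phi_0]=\alpha_n\phi_0-\phi_0\alpha_n$, the mode $\alpha_n$ acts on the target space in the first term and on the source space in the second. The matrix in part 4 means $L_n(u,w)=(L_nu+\phi_nw,\,L_nw)$. *)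

(* Defs.v *)
From HB Require Import structures.
From mathcomp Require Import all_boot all_order all_algebra.
Set Implicit Arguments. Unset Strict Implicit. Unset Printing Implicit Defensive.
Import Order.TTheory GRing.Theory Num.Theory.
Local Open Scope ring_scope.

Section Fock.
Variable R : fieldType.

(* V, with modes alpha : int -> V -> V and vacuum vac, is the Fock space F_eta:
   alpha_n linear, Heisenberg relations [a_m,a_n] = m delta_{m,-n},
   a_n vac = 0 for n > 0, a_0 acts as the scalar eta on all of V,
   and V is generated (spanned) by the vectors a_{-n1} ... a_{-nk} vac. *)
Definition heis_fock (V : lmodType R) (eta : R) (alpha : int -> V -> V) (vac : V)
  : Prop :=
  [/\ (forall n a u v, alpha n (a *: u + v) = a *: alpha n u + alpha n v),
      (forall m n v, alpha m (alpha n v) - alpha n (alpha m v)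
                     = if m + n == 0 then m%:~R *: v else 0),
      (forall n : int, 0 < n -> alpha n vac = 0),
      (forall v, alpha 0 v = eta *: v)
    & (forall v, exists s : seq (R * seq nat),
          v = \sum_(p <- s) p.1 *: foldr (fun k w => alpha (- (k.+1)%:Z) w) vac p.2)].

Definition nord (V : lmodType R) (alpha : int -> V -> V) (a b : int) (v : V) : V :=
  if 0 < a then alpha b (alpha a v) else alpha a (alpha b v).

(* truncation of L_n v = 1/2 sum_k :a_k a_{n-k}: v - lam (n+1) a_n v
   to the range -N <= k <= N *)
Definition vir_trunc (V : lmodType R) (alpha : int -> V -> V) (lam : R)
    (N : nat) (n : int) (v : V) : V :=
  2%:R^-1 *: (\sum_(i < (2 * N).+1)
                 nord alpha (i%:Z - N%:Z) (n - (i%:Z - N%:Z)) v)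
  - (lam * (n + 1)%:~R) *: alpha n v.

(* L is the Virasoro action on F_{eta,lam}: for every v the (finite, in the
   sense of eventually constant) infinite sum defining L_n v has value L n v. *)
Definition vir_action (V : lmodType R) (alpha : int -> V -> V) (lam : R)
    (L : int -> V -> V) : Prop :=
  forall n v, exists N0 : nat, forall N : nat, (N0 <= N)%N ->
      L n v = vir_trunc alpha lam N n v.

Definition vir_rep (W : lmodType R) (c : R) (L : int -> W -> W) : Prop :=
  (forall n a u v, L n (a *: u + v) = a *: L n u + L n v) /\
  (forall m n w, L m (L n w) - L n (L m w)
      = (m - n)%:~R *: L (m + n) w
        + (if m + n == 0 then (c / 12%:R * (m ^+ 3 - m)%:~R) *: w else 0)).

End Fock.

(* Main.v *)
Require Import Defs.
From HB Require Import structures.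
From mathcomp Require Import all_boot all_order all_algebra.
From mathcomp Require Import ring zify.
Set Implicit Arguments. Unset Strict Implicit. Unset Printing Implicit Defensive.
Import Order.TTheory GRing.Theory Num.Theory.
Local Open Scope ring_scope.

Section TE.
Variable R : fieldType.
Variable V : lmodType R.
Definition TE := (R * V)%type.
HB.instance Definition _ := GRing.Zmodule.on TE.
Definition te_one : TE := (1, 0).
Definition te_mul (x y : TE) : TE := (x.1 * y.1, x.1 *: y.2 + y.1 *: x.2).
Lemma te_mulA : associative te_mul.
Proof. move=> [a u] [b v] [c w]; rewrite /te_mul /=; congr pair; first by rewrite mulrA.
rewrite !scalerDr !scalerA [c * a]mulrC [c * b]mulrC [b * c]mulrC [a * b]mulrC.
by rewrite addrA. Qed.
Lemma te_mulC : commutative te_mul.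
Proof. by move=> [a u] [b v]; rewrite /te_mul /= mulrC addrC. Qed.
Lemma te_mul1 : left_id te_one te_mul.
Proof. by move=> [a u]; rewrite /te_mul /= mul1r scale1r scaler0 addr0. Qed.
Lemma te_mulDl : left_distributive te_mul +%R.
Proof. move=> [a u] [b v] [c w]; rewrite /te_mul /=; congr pair; first by rewrite mulrDl.
by rewrite scalerDl scalerDr addrACA. Qed.
Lemma te_one0 : te_one != 0.
Proof. by apply/negP => /eqP [] /eqP; rewrite oner_eq0. Qed.
HB.instance Definition _ := GRing.Zmodule_isComNzRing.Build TE te_mulA te_mulC te_mul1 te_mulDl te_one0.
Definition temb (r : R) : TE := (r, 0).
Lemma temb_zmod : zmod_morphism temb.
Proof. by move=> x y; rewrite /temb; congr pair; rewrite subrr. Qed.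
HB.instance Definition _ := GRing.isZmodMorphism.Build R TE temb temb_zmod.
Lemma temb_mon : monoid_morphism temb.
Proof. split => // x y; rewrite /temb; congr pair => /=.
 by rewrite /= !scaler0 addr0. Qed.
HB.instance Definition _ := GRing.isMonoidMorphism.Build R TE temb temb_mon.
Definition tinj (v : V) : TE := (0, v).
Lemma tinj_inj : injective tinj. Proof. by move=> x y []. Qed.
Lemma tinj_zmod : zmod_morphism tinj.
Proof. by move=> x y; rewrite /tinj; congr pair; rewrite subrr. Qed.
HB.instance Definition _ := GRing.isZmodMorphism.Build V TE tinj tinj_zmod.
Lemma tinjZ (a : R) (v : V) : tinj (a *: v) = temb a * tinj v.
Proof. rewrite /tinj /temb. change ((0, a *: v) = te_mul (a, 0) (0, v)). by rewrite /te_mul /= mulr0 scaler0 addr0. Qed.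
Lemma tinjD x y : tinj (x + y) = tinj x + tinj y. Proof. exact: raddfD. Qed.
Lemma tinjB x y : tinj (x - y) = tinj x - tinj y. Proof. exact: raddfB. Qed.
Lemma tinjN x : tinj (- x) = - tinj x. Proof. exact: raddfN. Qed.
Lemma tinj0 : tinj 0 = 0. Proof. exact: raddf0. Qed.
Definition tinjE := (tinjD, tinjB, tinjN, tinj0, tinjZ).
End TE.

Lemma sum_pick (W : zmodType) (N : nat) (k0 : int) (F : int -> W) :
  - (N%:Z) <= k0 -> k0 <= N%:Z ->
  \sum_(i < (2 * N).+1) (if i%:Z - N%:Z == k0 then F (i%:Z - N%:Z) else 0) = F k0.
Proof.
move=> h1 h2.
have hi : (absz (k0 + N%:Z)%R < (2*N).+1)%N by lia.
have e : (absz (k0 + N%:Z))%:Z - N%:Z = k0 by lia.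
rewrite (bigD1 (Ordinal hi)) //= e eqxx big1 ?addr0 // => j hj.
case: ifP => // /eqP hj'; exfalso; move: hj => /eqP; apply; apply: val_inj => /=. lia.
Qed.

Lemma sum_window (W : zmodType) (N m : nat) (F : int -> W) : (m <= N)%N ->
  \sum_(i < (2 * N).+1) (if (- m%:Z <= i%:Z - N%:Z) && (i%:Z - N%:Z <= 0)
                          then F (i%:Z - N%:Z) else 0)
  = \sum_(j < m.+1) F (j%:Z - m%:Z).
Proof.
move=> hmN.
set f := (fun i : nat => if (- m%:Z <= i%:Z - N%:Z) && (i%:Z - N%:Z <= 0)
                          then F (i%:Z - N%:Z) else 0).
rewrite -(big_mkord xpredT f).
rewrite (@big_cat_nat _ _ _ (N - m)) //=; last lia.
rewrite (@big_cat_nat _ _ _ N.+1 (N - m)) //=; try lia.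
have Z1 : \sum_(0 <= i < N - m) f i = 0.
  rewrite big_nat_cond big1 // => i /andP[/andP[_ hi] _].
  by rewrite /f ifF //; apply/negbTE; lia.
have Z2 : \sum_(N.+1 <= i < (2 * N).+1) f i = 0.
  rewrite big_nat_cond big1 // => i /andP[/andP[hi _] _].
  by rewrite /f ifF //; apply/negbTE; lia.
rewrite Z1 Z2 add0r addr0.
rewrite -{1}(add0n (N - m)%N) big_addn.
have -> : (N.+1 - (N - m) = m.+1)%N by lia.
rewrite big_mkord; apply: eq_bigr => j _; rewrite /f.
have -> : ((j + (N - m))%N%:Z - N%:Z) = j%:Z - m%:Z.
  have := ltn_ord j; lia.
by rewrite ifT //; have := ltn_ord j; lia.
Qed.

Lemma sumj (m : nat) : 2 * \sum_(j < m.+1) (j%:Z) = m%:Z * (m%:Z + 1).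
Proof.
elim: m => [|m IH]; first by rewrite big_ord1.
rewrite big_ord_recr /= mulrDr IH; lia.
Qed.

Lemma sumc (m : nat) : 6 * \sum_(j < m.+1) ((m%:Z - j%:Z) * j%:Z) = m%:Z ^+ 3 - m%:Z.
Proof.
elim: m => [|m IH]; first by rewrite big_ord1.
rewrite big_ord_recr /=.
rewrite (eq_bigr (fun j : 'I_m.+1 => (m%:Z - j%:Z) * j%:Z + j%:Z)); last first.
  move=> j _; lia.
rewrite big_split /= mulrDr mulrDr IH.
rewrite (_ : 6 * \sum_(i < m.+1) (i%:Z) = 3 * (2 * \sum_(i < m.+1) (i%:Z))); last by rewrite mulrA.
rewrite sumj !exprS expr0 !mulr1; nia.
Qed.

Section Vir.
Variables (R : fieldType) (V : lmodType R) (eta lam : R)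
  (alpha : int -> V -> V) (vac : V) (L : int -> V -> V).
Hypothesis Hf : heis_fock eta alpha vac.
Hypothesis HL : vir_action alpha lam L.

Definition cc (m n : int) : R := if m + n == 0 then m%:~R else 0.

Lemma alin n a u v : alpha n (a *: u + v) = a *: alpha n u + alpha n v.
Proof. by case: Hf. Qed.
Lemma a0 n : alpha n 0 = 0.
Proof. have := alin n 1 0 0; rewrite !scale1r addr0 => /eqP.
by rewrite -{1}[alpha n 0]addr0 (inj_eq (addrI _)) eq_sym => /eqP. Qed.
Lemma aD n u v : alpha n (u + v) = alpha n u + alpha n v.
Proof. by have := alin n 1 u v; rewrite !scale1r. Qed.
Lemma aZ n a u : alpha n (a *: u) = a *: alpha n u.
Proof. by rewrite -[a *: u]addr0 alin a0 addr0. Qed.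
Lemma aN n u : alpha n (- u) = - alpha n u.
Proof. by rewrite -scaleN1r aZ scaleN1r. Qed.
Lemma aB n u v : alpha n (u - v) = alpha n u - alpha n v.
Proof. by rewrite aD aN. Qed.
Lemma asum n (I : Type) (r : seq I) (P : pred I) (F : I -> V) :
  alpha n (\sum_(i <- r | P i) F i) = \sum_(i <- r | P i) alpha n (F i).
Proof. exact: (big_morph (alpha n) (aD n) (a0 n)). Qed.
Lemma acomm m n v : alpha m (alpha n v) = alpha n (alpha m v) + cc m n *: v.
Proof.
case: Hf => _ H _ _ _; move: (H m n v); rewrite /cc.
by case: ifP => _ /eqP; rewrite subr_eq => /eqP ->; rewrite ?scale0r // addrC.
Qed.
Lemma akill n : 0 < n -> alpha n vac = 0.
Proof. by case: Hf => _ _ H _ _; apply: H. Qed.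
Lemma aeta v : alpha 0 v = eta *: v.
Proof. by case: Hf. Qed.

Definition tr N n v := vir_trunc alpha lam N n v.

Lemma nord_lin x y a u v : nord alpha x y (a *: u + v) = a *: nord alpha x y u + nord alpha x y v.
Proof. by rewrite /nord; case: ifP => _; rewrite !alin. Qed.

Lemma tr_lin N n a u v : tr N n (a *: u + v) = a *: tr N n u + tr N n v.
Proof.
rewrite /tr /vir_trunc (eq_bigr _ (fun i _ => nord_lin _ _ a u v)) big_split /=.
rewrite -scaler_sumr alin.
apply: (@tinj_inj _ V); rewrite !tinjE; ring.
Qed.

Lemma Lex2 n1 n2 v1 v2 M : exists N, [/\ (M <= N)%N, L n1 v1 = tr N n1 v1 & L n2 v2 = tr N n2 v2].
Proof.
have [N1 H1] := HL n1 v1; have [N2 H2] := HL n2 v2.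
exists (maxn M (maxn N1 N2)); split; first exact: leq_maxl.
  by apply: H1; rewrite (leq_trans _ (leq_maxr _ _)) // leq_maxl.
by apply: H2; rewrite (leq_trans _ (leq_maxr _ _)) // leq_maxr.
Qed.

Lemma Llin n a u v : L n (a *: u + v) = a *: L n u + L n v.
Proof.
have [N1 H1] := HL n (a *: u + v); have [N2 H2] := HL n u; have [N3 H3] := HL n v.
set N := maxn N1 (maxn N2 N3).
rewrite (H1 N) ?(H2 N) ?(H3 N); first exact: tr_lin. all: rewrite /N; lia. Qed.
Lemma L0 n : L n 0 = 0.
Proof. have := Llin n 1 0 0; rewrite !scale1r addr0 => /eqP.
by rewrite -{1}[L n 0]addr0 (inj_eq (addrI _)) eq_sym => /eqP. Qed.
Lemma LD n u v : L n (u + v) = L n u + L n v.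
Proof. by have := Llin n 1 u v; rewrite !scale1r. Qed.
Lemma LZ n a u : L n (a *: u) = a *: L n u.
Proof. by rewrite -[a *: u]addr0 Llin L0 addr0. Qed.
Lemma LN n u : L n (- u) = - L n u.
Proof. by rewrite -scaleN1r LZ scaleN1r. Qed.
Lemma LB n u v : L n (u - v) = L n u - L n v.
Proof. by rewrite LD LN. Qed.
Lemma Lsum n (I : Type) (r : seq I) (P : pred I) (F : I -> V) :
  L n (\sum_(i <- r | P i) F i) = \sum_(i <- r | P i) L n (F i).
Proof. exact: (big_morph (L n) (LD n) (L0 n)). Qed.

Lemma a_nord n x y w : alpha n (nord alpha x y w) =
  nord alpha x y (alpha n w) + cc n x *: alpha y w + cc n y *: alpha x w.
Proof.
rewrite /nord; case: ifP => _.
  rewrite (acomm n y) (acomm n x) aD aZ; apply: (@tinj_inj _ V); rewrite !tinjE; ring.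
rewrite (acomm n x) (acomm n y) aD aZ; apply: (@tinj_inj _ V); rewrite !tinjE; ring.
Qed.

Hypothesis hR : [pchar R] =i pred0.

Lemma two_neq0 : (2%:R : R) != 0.
Proof. by move/pcharf0P: hR => ->. Qed.

Lemma half2 (x y : V) : 2%:R^-1 *: (x + y + y) = 2%:R^-1 *: x + y.
Proof.
by rewrite -addrA -(mulr2n y) -scaler_nat scalerDr scalerA mulVf ?two_neq0 ?scale1r.
Qed.

Lemma LaC m n w : L m (alpha n w) =
  alpha n (L m w) - n%:~R *: alpha (m + n) w + (lam * (m+1)%:~R * cc n m) *: w.
Proof.
have [N [hN H1 H2]] := Lex2 m m (alpha n w) w (absz n + absz (m+n)).
rewrite H1 H2 /tr /vir_trunc aB !aZ asum.
rewrite (eq_bigr _ (fun i _ => a_nord _ _ _ _)) !big_split /=.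
have -> : \sum_(i < (2 * N).+1) cc n (i%:Z - N%:Z) *: alpha (m - (i%:Z - N%:Z)) w
   = \sum_(i < (2 * N).+1) (if i%:Z - N%:Z == - n then
        (fun k => n%:~R *: alpha (m - k) w) (i%:Z - N%:Z) else 0).
  apply: eq_bigr => i _; rewrite /cc.
  have -> : (n + (i%:Z - N%:Z) == 0) = (i%:Z - N%:Z == - n) by apply/eqP/eqP; lia.
  by case: ifP => _; rewrite ?scale0r.
have -> : \sum_(i < (2 * N).+1) cc n (m - (i%:Z - N%:Z)) *: alpha (i%:Z - N%:Z) w
   = \sum_(i < (2 * N).+1) (if i%:Z - N%:Z == m + n then
        (fun k => n%:~R *: alpha k w) (i%:Z - N%:Z) else 0).
  apply: eq_bigr => i _; rewrite /cc.
  have -> : (n + (m - (i%:Z - N%:Z)) == 0) = (i%:Z - N%:Z == m + n) by apply/eqP/eqP; lia.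
  by case: ifP => _; rewrite ?scale0r.
rewrite (@sum_pick _ N (- n) (fun k => n%:~R *: alpha (m - k) w)); try lia.
rewrite (@sum_pick _ N (m + n) (fun k => n%:~R *: alpha k w)); try lia.
rewrite opprK half2 (acomm n m w).
apply: (@tinj_inj _ V); rewrite !tinjE; ring.
Qed.

Definition hh : R := 2%:R^-1 * (eta * eta) - lam * eta.

Lemma Lkill0 w : (forall j, 0 < j -> alpha j w = 0) -> L 0 w = hh *: w.
Proof.
move=> Hw; have [N0 H] := HL 0 w; rewrite (H N0) // /vir_trunc.
have -> : \sum_(i < (2 * N0).+1) nord alpha (i%:Z - N0%:Z) (0 - (i%:Z - N0%:Z)) w
   = \sum_(i < (2 * N0).+1) (if i%:Z - N0%:Z == 0 then
        (fun _ => (eta * eta) *: w) (i%:Z - N0%:Z) else 0).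
  apply: eq_bigr => i _; set k := (i%:Z - N0%:Z); rewrite /nord.
  case: (ltrgt0P k) => hk.
  - by rewrite Hw // a0.
  - by rewrite Hw ?a0 // subr_gt0.
  - by rewrite hk subrr !aeta scalerA.
rewrite (@sum_pick _ N0 0 (fun _ => (eta * eta) *: w)); try lia.
rewrite aeta /hh; apply: (@tinj_inj _ V); rewrite !tinjE; ring.
Qed.

Lemma Lpos n w : 0 < n -> (forall j, 0 < j -> alpha j w = 0) -> L n w = 0.
Proof.
move=> hn Hw; have [N0 H] := HL n w; rewrite (H N0) // /vir_trunc Hw // scaler0 subr0.
rewrite big1 ?scaler0 // => i _; rewrite /nord; case: ifP => hk.
  by rewrite Hw // a0.
by rewrite Hw ?a0 //; move: hk; rewrite ltNge => /negbFE hk; rewrite subr_gt0 (le_lt_trans hk hn).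
Qed.

Lemma L0a n w : L 0 (alpha n w) = alpha n (L 0 w) - n%:~R *: alpha n w.
Proof.
rewrite LaC add0r; have -> : cc n 0 = 0 by rewrite /cc addr0; case: ifP => // /eqP ->.
by rewrite mulr0 scale0r addr0.
Qed.

Lemma L0nord x j w : L 0 (nord alpha x (j - x) w) =
  nord alpha x (j - x) (L 0 w) - j%:~R *: nord alpha x (j - x) w.
Proof.
have e : x + (j - x) = j by rewrite addrC subrK.
have e2 : (j%:~R : R) = x%:~R + (j - x)%:~R by rewrite -intrD e.
rewrite /nord e2; case: ifP => _; rewrite !L0a aB aZ;
 apply: (@tinj_inj _ V); rewrite !tinjE; ring.
Qed.

Lemma L0C j w : L 0 (L j w) = L j (L 0 w) - j%:~R *: L j w.
Proof.
have [N [_ H1 H2]] := Lex2 j j w (L 0 w) 0.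
rewrite H1 H2 /tr /vir_trunc LB !LZ Lsum (eq_bigr _ (fun i _ => L0nord _ _ _)).
rewrite big_split /= sumrN -scaler_sumr L0a.
apply: (@tinj_inj _ V); rewrite !tinjE; ring.
Qed.

Definition cen (m : int) : R := (1 - 12%:R * lam ^+ 2) / 12%:R * (m ^+ 3 - m)%:~R.

Definition Dop m n w := L m (L n w) - L n (L m w) -
  ((m - n)%:~R *: L (m + n) w + (if m + n == 0 then cen m *: w else 0)).

Lemma DaC m n k w : Dop m n (alpha k w) = alpha k (Dop m n w).
Proof.
rewrite /Dop !(LaC, LD, LB, LZ, LN) !(aB, aD, aZ, aN).
have e1 : n + (m + k) = m + (n + k) by rewrite addrCA.
have e2 : m + n + k = m + (n + k) by rewrite addrA.
rewrite e1 e2 /cc.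
have c1 : (n + k + m == 0) = (m + n + k == 0) by apply/eqP/eqP; lia.
have c2 : (m + k + n == 0) = (m + n + k == 0) by apply/eqP/eqP; lia.
have c3 : (k + (m + n) == 0) = (m + n + k == 0) by apply/eqP/eqP; lia.
rewrite c1 c2 c3.
case: (m + n == 0); rewrite ?aZ ?a0 ?scaler0 ?(aN, aD, aB, aZ);
case hE: (m + n + k == 0).
- have ek : k = - (m + n) by move/eqP: hE; lia.
  subst k; apply: (@tinj_inj _ V); rewrite !tinjE; ring.
- apply: (@tinj_inj _ V); rewrite !tinjE; ring.
- have ek : k = - (m + n) by move/eqP: hE; lia.
  subst k; apply: (@tinj_inj _ V); rewrite !tinjE; ring.
- apply: (@tinj_inj _ V); rewrite !tinjE; ring.
Qed.

Lemma Dlin m n a u v : Dop m n (a *: u + v) = a *: Dop m n u + Dop m n v.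
Proof.
rewrite /Dop !(Llin, LD, LZ); case: (m + n == 0);
  apply: (@tinj_inj _ V); rewrite !tinjE; ring.
Qed.

Lemma D0 m n : Dop m n 0 = 0.
Proof. by rewrite /Dop !L0 !scaler0 subrr sub0r add0r; case: ifP; rewrite ?scaler0 oppr0. Qed.

Lemma Danti m n w : Dop m n w = - Dop n m w.
Proof.
rewrite /Dop [n + m]addrC; case: ifP => [/eqP h|_].
  have -> : n = - m by lia.
  rewrite /cen; apply: (@tinj_inj _ V); rewrite !tinjE; ring.
apply: (@tinj_inj _ V); rewrite !tinjE; ring.
Qed.

Lemma intr_neq0 (z : int) : z != 0 -> (z%:~R : R) != 0.
Proof.
move/pcharf0P: hR => H; case: z => [n|n] hz.
  change (n%:R != 0 :> R); rewrite H; apply: contra hz => /eqP ->; done.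
rewrite NegzE intrN oppr_eq0; change (n.+1%:R != 0 :> R); by rewrite H.
Qed.

Lemma hv : L 0 vac = hh *: vac.
Proof. exact: (Lkill0 akill). Qed.

Lemma Dvac_gen m n : m + n != 0 -> Dop m n vac = 0.
Proof.
move=> h.
have hk : forall j, 0 < j -> alpha j (Dop m n vac) = 0.
  by move=> j hj; rewrite -DaC akill // D0.
have e1 := Lkill0 hk.
have E : L 0 (Dop m n vac) = (hh - (m + n)%:~R) *: Dop m n vac.
  rewrite /Dop (negbTE h) !addr0 !(LB, LD, LZ, LN, L0C) hv !(LB, LD, LZ, LN).
  apply: (@tinj_inj _ V); rewrite !tinjE; ring.
move: E; rewrite e1 => /eqP; rewrite -subr_eq0 -scalerBl.
rewrite opprB addrC subrK scaler_eq0 (negbTE (intr_neq0 h)) /= => /eqP.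
done.
Qed.

Lemma Lm_vac m : 0 < m -> L m vac = 0.
Proof. by move=> hm; apply: Lpos => //; exact: akill. Qed.

Definition cst (m : int) : R := m%:~R * (eta * eta) - lam * (m * (m + 1))%:~R * eta.
Definition gk (m k : int) : R :=
  (if (- m <= k) && (k <= 0) then ((- k) * (m + k))%:~R else 0) +
  (if k == 0 then cst m else 0) + (if k == - m then cst m else 0).

Lemma gk0 m k : 0 < m -> (0 < k) || (k < - m) -> gk m k = 0.
Proof.
move=> hm h; rewrite /gk ifF; last by apply/negbTE; lia.
rewrite ifF; last by apply/negbTE; lia.
rewrite ifF; last by apply/negbTE; lia.
by rewrite !addr0.
Qed.

Lemma Tk m k : 0 < m -> L m (nord alpha k (- m - k) vac) = gk m k *: vac.
Proof.
move=> hm; rewrite /nord; case: ifP => hk.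
  by rewrite akill // a0 L0 gk0 ?hk // scale0r.
case: (boolP (k < - m)) => hkm.
  rewrite (akill (n := - m - k)); last lia.
  by rewrite (a0 k) L0 gk0 ?hkm ?orbT // scale0r.
have e : m + (- m - k) = - k by rewrite addrA subrr sub0r.
rewrite !LaC Lm_vac // a0 add0r e /gk ifT; last lia.
case: (ltrgt0P k) => hk0; first lia.
- case: (eqVneq k (- m)) => hkm2.
  + subst k.
    have z1 : - m - - m = 0 by rewrite opprK addNr.
    rewrite z1 opprK (akill hm) scaler0 oppr0 add0r subrr !aeta.
    have c1 : cc 0 m = 0 by rewrite /cc add0r ifF //; apply/negbTE; lia.
    have c2 : cc (- m) m = (- m)%:~R by rewrite /cc addNr eqxx.
    rewrite c1 c2 mulr0 scale0r (a0 (- m)) /cst; apply: (@tinj_inj _ V); rewrite !tinjE; ring.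
  + rewrite (akill (n := - k)) ?oppr_gt0 // scaler0 oppr0 add0r.
    have c1 : cc (- m - k) m = 0 by rewrite /cc ifF //; apply/negbTE; lia.
    have c2 : cc k m = 0 by rewrite /cc ifF //; apply/negbTE; lia.
    have c3 : cc (m + k) (- m - k) = (m + k)%:~R by rewrite /cc ifT //; lia.
    rewrite c1 c2 (acomm (m + k)) (akill (n := m + k)); last lia.
    rewrite (a0 (- m - k)) add0r c3 aZ.
    apply: (@tinj_inj _ V); rewrite !tinjE; ring.
- subst k.
  have c1 : cc (- m - 0) m = (- m)%:~R by rewrite /cc ifT; [rewrite subr0 | lia].
  have c2 : cc 0 m = 0 by rewrite /cc add0r ifF //; apply/negbTE; lia.
  rewrite c1 c2 oppr0 !aeta ifF; last lia.
  rewrite /cst; apply: (@tinj_inj _ V); rewrite !tinjE; ring.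
Qed.

Lemma Dvac_pos (m : nat) : (0 < m)%N -> Dop m%:Z (- m%:Z) vac = 0.
Proof.
move=> hm0; have hm : 0 < m%:Z by lia.
have [N [hN H1 _]] := Lex2 (- m%:Z) (- m%:Z) vac vac m.
rewrite /Dop (Lm_vac hm) (L0 (- m%:Z)) addrN eqxx hv H1 /tr /vir_trunc LB LZ Lsum.
rewrite (eq_bigr _ (fun (i : 'I_(2 * N).+1) _ => Tk (i%:Z - N%:Z) hm)) -scaler_suml /gk !big_split /=.
rewrite (@sum_window _ N m (fun k => ((- k) * (m%:Z + k))%:~R)) //.
rewrite (@sum_pick _ N 0 (fun _ => cst m)); try lia.
rewrite (@sum_pick _ N (- m%:Z) (fun _ => cst m)); try lia.
have -> : \sum_(j < m.+1) ((- (j%:Z - m%:Z)) * (m%:Z + (j%:Z - m%:Z)))%:~R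
   = ((\sum_(j < m.+1) ((m%:Z - j%:Z) * j%:Z))%:~R : R).
  rewrite (big_morph (fun z : int => z%:~R : R) (@intrD R) (mulr0z 1)).
  by apply: eq_bigr => j _; congr (_%:~R); ring.
have hS := sumc m.
set S := ((\sum_(j < m.+1) ((m%:Z - j%:Z) * j%:Z))%:~R : R).
have hS' : S = ((m%:Z ^+ 3 - m%:Z)%:~R) / 6%:R.
  have h6 : (6%:R : R) != 0 by move/pcharf0P: hR => ->.
  by rewrite -hS intrM /S; field.
rewrite LZ LaC (Lm_vac hm) (a0 (- m%:Z)) addrN aeta.
have -> : cc (- m%:Z) m = (- m%:Z)%:~R by rewrite /cc addNr eqxx.
pose c := 2%:R^-1 * (S + cst m + cst m)
   - lam * (- m%:Z + 1)%:~R * (- (- m%:Z)%:~R * eta + lam * (m%:Z + 1)%:~R * (- m%:Z)%:~R)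
   - ((m%:Z - - m%:Z)%:~R * hh + cen m).
have c0 : c = 0.
  have h6 : (6%:R : R) != 0 by move/pcharf0P: hR => ->.
  have h12 : (12%:R : R) != 0 by move/pcharf0P: hR => ->.
  have h2 := two_neq0.
  rewrite /c hS' /cst /hh /cen; field; by rewrite h2 h6 h12.
apply: (@eq_trans _ _ (c *: vac)); last by rewrite c0 scale0r.
apply: (@tinj_inj _ V); rewrite !tinjE /c; ring.
Qed.

Lemma Dvac m n : Dop m n vac = 0.
Proof.
case: (eqVneq (m + n) 0) => h; last exact: Dvac_gen.
have -> : n = - m by lia.
case: (ltrgt0P m) => hm.
- case: m h hm => [k|k] _ hk; last by [].
  by apply: Dvac_pos; lia.
- have [k [-> hk]] : exists k : nat, m = - k%:Z /\ (0 < k)%N.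
    by exists (absz m); split; lia.
  by rewrite Danti !opprK Dvac_pos // oppr0.
- subst m; rewrite /Dop; apply: (@tinj_inj _ V); rewrite oppr0 addr0 eqxx !tinjE /cen; ring.
Qed.

Lemma Dall m n w : Dop m n w = 0.
Proof.
case: Hf => _ _ _ _ Hs; have [s ->] := Hs w.
elim: s => [|p s IH]; first by rewrite big_nil D0.
rewrite big_cons Dlin IH addr0.
have -> : Dop m n (foldr (fun k w => alpha (- (k.+1)%:Z) w) vac p.2) = 0.
  by elim: p.2 => [|k t IHt] /=; [exact: Dvac | rewrite DaC IHt a0].
by rewrite scaler0.
Qed.

Lemma Lrep : vir_rep (1 - 12%:R * lam ^+ 2) L.
Proof.
split; first exact: Llin.
by move=> m n w; have := Dall m n w; rewrite /Dop => /eqP; rewrite subr_eq0 => /eqP.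
Qed.

End Vir.

Unset Implicit Arguments.

Lemma pair_ext (A B : Type) (p q : A * B) : p.1 = q.1 -> p.2 = q.2 -> p = q.
Proof. by case: p; case: q => /= ? ? ? ? -> ->. Qed.

Theorem mainTheorem3 (R : fieldType) (hR : [pchar R] =i pred0)
    (V1 V2 : lmodType R) (eta1 eta2 lam : R)
    (alpha1 : int -> V1 -> V1) (alpha2 : int -> V2 -> V2)
    (vac1 : V1) (vac2 : V2)
    (L1 : int -> V1 -> V1) (L2 : int -> V2 -> V2) (phi0 : V1 -> V2) :
  heis_fock eta1 alpha1 vac1 -> heis_fock eta2 alpha2 vac2 ->
  vir_action alpha1 lam L1 -> vir_action alpha2 lam L2 ->
  (forall a u v, phi0 (a *: u + v) = a *: phi0 u + phi0 v) ->
  (forall m v, L2 m (phi0 v) = phi0 (L1 m v)) ->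
  eta1 != eta2 ->
  let k := eta2 - eta1 in
  let phi := fun (n : int) (v : V1) => k^-1 *: (alpha2 n (phi0 v) - phi0 (alpha1 n v)) in
  [/\ (forall v, phi 0 v = phi0 v),
      (forall m n v, L2 m (phi n v) - phi n (L1 m v) = - (n%:~R) *: phi (m + n) v),
      (forall m n v, (L2 m (phi n v) - phi n (L1 m v)) - (L2 n (phi m v) - phi m (L1 n v))
                     = (m - n)%:~R *: phi (m + n) v)
    & vir_rep (1 - 12%:R * lam ^+ 2)
        (fun (n : int) (p : (V2 * V1)%type) => (L2 n p.1 + phi n p.2, L1 n p.2))].
Proof.
move=> H1 H2 HL1 HL2 Hphi HLphi hne k phi.
have hk : k != 0 by rewrite /k subr_eq0 eq_sym.
have p00 : phi0 0 = 0.
  have := Hphi 1 0 0; rewrite !scale1r addr0 => /eqP.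
  by rewrite -{1}[phi0 0]addr0 (inj_eq (addrI _)) eq_sym => /eqP.
have pD u v : phi0 (u + v) = phi0 u + phi0 v by have := Hphi 1 u v; rewrite !scale1r.
have pZ a u : phi0 (a *: u) = a *: phi0 u by rewrite -[a *: u]addr0 Hphi p00 addr0.
have pN u : phi0 (- u) = - phi0 u by rewrite -scaleN1r pZ scaleN1r.
have pB u v : phi0 (u - v) = phi0 u - phi0 v by rewrite pD pN.
have P2 : forall m n v, L2 m (phi n v) - phi n (L1 m v) = - (n%:~R) *: phi (m + n) v.
  move=> m n v; rewrite /phi (LZ H2 HL2) (LB H2 HL2) (LaC H2 HL2 hR) !HLphi (LaC H1 HL1 hR).
  rewrite !(pB, pD, pZ, pN).
  apply: (@tinj_inj _ V2); rewrite !tinjE; ring.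
split.
- move=> v; rewrite /phi (aeta H2) (aeta H1) pZ -scalerBl -/k scalerA mulVf //.
  by rewrite scale1r.
- exact: P2.
- move=> m n v; rewrite !P2 [n + m]addrC.
  apply: (@tinj_inj _ V2); rewrite !tinjE; ring.
have phiL n a u v : phi n (a *: u + v) = a *: phi n u + phi n v.
  rewrite /phi Hphi (alin H1) (alin H2) Hphi.
  apply: (@tinj_inj _ V2); rewrite !tinjE; ring.
have [LL2 RR2] := Lrep H2 HL2 hR.
have [LL1 RR1] := Lrep H1 HL1 hR.
split.
  move=> n a [u2 u1] [v2 v1]; apply: pair_ext => /=.
    rewrite LL2 phiL; apply: (@tinj_inj _ V2); rewrite !tinjE; ring.
  by rewrite LL1.
move=> m n [w2 w1]; apply: pair_ext => /=.
  have e1 : L2 m (phi n w1) = - n%:~R *: phi (m + n) w1 + phi n (L1 m w1).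
    by apply/eqP; rewrite -subr_eq P2.
  have e2 : L2 n (phi m w1) = - m%:~R *: phi (m + n) w1 + phi m (L1 n w1).
    by apply/eqP; rewrite -subr_eq P2 addrC.
  have e3 := RR2 m n w2; move/eqP: e3; rewrite subr_eq => /eqP e3.
  rewrite !(LD H2 HL2) e1 e2 e3; case: ifP => _ /=;
  apply: (@tinj_inj _ V2); rewrite !tinjE; ring.
by rewrite RR1; case: ifP.
Qed.
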